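(* With notation as in the context, the map sending $v=(v_{L^\circ})_{L^\circ\in OLag(V_1\times V_2)}\in\mathcal H(V_1\times V_2)$ to the family $\big(r^*_{(L_1^\circ,L_2^\circ)}(v_{s(L_1^\circ,L_2^\circ)})\big)_{(L_1^\circ,L_2^\circ)\in OLag(V_1)\times OLag(V_2)}$ is a linear isomorphism $$\alpha_{V_1\times V_2}:\mathcal H(V_1\times V_2)\xrightarrow{\ \simeq\ }\mathcal H(V_1)\otimes\mathcal H(V_2),$$ where $\mathcal H(V_1)\otimes\mathcal H(V_2)$ is identified with the space of families $(w_{(L_1^\circ,L_2^\circ)}\in\mathcal H_{L_1^\circ}(V_1)\otimes\mathcal H_{L_2^\circ}(V_2))$ satisfying $(T^{V_1}_{M_1^\circ,L_1^\circ}\otimes T^{V_2}_{M_2^\circ,L_2^\circ})w_{(L_1^\circ,L_2^\circ)}=w_{(M_1^\circ,M_2^\circ)}$ for all pairs. This isomorphism is natural and intertwines $\rho_{V_1\times V_2}$ restricted to $Sp(V_1)\times Sp(V_2)$ with $\rho_{V_1}\otimes\rho_{V_2}$.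
   Context: $q$ is a power of an odd prime. For a symplectic space $(V,\omega)$ of dimension $2n$ over $\mathbb F_q$: $H(V)$ is $V\times\mathbb F_q$ with $(v,z)(v',z')=(v+v',z+z'+\tfrac12\omega(v,v'))$; $\psi$ is a fixed non-trivial character of $\mathbb F_q$; an oriented Lagrangian is $L^\circ=(L,o_L)$ with $L$ Lagrangian and $o_L\in\bigwedge^nL$ nonzero, $OLag(V)$ their set; $\mathcal H_{L^\circ}(V)$ is the space of $f:H(V)\to\mathbb C$ with $f((0,z)(l,0)h)=\psi(z)f(h)$, with $H(V)$ acting by right translation. $\omega_\wedge(a_1\wedge\dots\wedge a_n,b_1\wedge\dots\wedge b_n)=(-1)^{n(n-1)/2}\det(\omega(a_i,b_j))$; $\sigma$ the Legendre character; $G_1=\sum_z\psi(\tfrac12z^2)$. For $M+L=V$ set $T^0_{M^\circ,L^\circ}f(h)=(G_1/q)^n\sigma((-1)^{n(n-1)/2}\omega_\wedge(o_L,o_M))\sum_{m\in M}f((m,0)h)$. The canonical trivialization $T^V$ is the unique family of $H(V)$-intertwining isomorphisms $T^V_{M^\circ,L^\circ}:\mathcal H_{L^\circ}(V)\to\mathcal H_{M^\circ}(V)$ with $T^V_{N^\circ,M^\circ}T^V_{M^\circ,L^\circ}=T^V_{N^\circ,L^\circ}$ always and $T^V=T^0$ on general-position pairs. $\mathcal H(V)$ is the space of families $(v_{L^\circ}\in\mathcal H_{L^\circ}(V))$ with $T^V_{M^\circ,L^\circ}v_{L^\circ}=v_{M^\circ}$; $Sp(V)$ acts on it by $\rho_V(g)(v)_{L^\circ}=v_{gL^\circ}\circ\tilde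 g^{-1}$... more precisely $\rho_V(g)=\mathcal H(g^{-1})$, where for an isomorphism $f:V\to V'$, $\mathcal H(f)(v)_{L^\circ}=v_{f(L^\circ)}\circ r_f$ with $r_f(v,z)=(f(v),z)$. For $V_1\times V_2$ (form $\omega_1\oplus\omega_2$): $r((v_1,z_1),(v_2,z_2))=((v_1,v_2),z_1+z_2)$, $s(L_1^\circ,L_2^\circ)=(L_1\times L_2,o_{L_1}\wedge o_{L_2})$, and $r^*_{(L_1^\circ,L_2^\circ)}(g)=g\circ r\in\mathcal H_{L_1^\circ}(V_1)\otimes\mathcal H_{L_2^\circ}(V_2)$. *)

(* Defs.v *)
From HB Require Import structures.
From mathcomp Require Import all_boot all_order all_algebra all_field.
Set Implicit Arguments. Unset Strict Implicit. Unset Printing Implicit Defensive.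
Import Order.TTheory GRing.Theory Num.Theory.
Local Open Scope ring_scope.

(* Model: a symplectic space (V, omega) of dimension m = 2n over the finite
   field F is 'rV[F]_m with omega(v,w) = v Om w^T, Om alternating invertible.
   Linear maps act on row vectors on the right: f(v) = v *m g.
   A Lagrangian L with orientation o_L = b_1 /\ ... /\ b_n is presented by a
   "frame" B : 'M_(n,m) whose rows b_i form a basis of L.  Families indexed
   by OLag(V) are presented as functions on frames. *)

Section Defs.
Variable F : finFieldType.

Definition nontriv_add_char (psi : F -> algC) :=
  (forall a b, psi (a + b) = psi a * psi b) /\ exists a, psi a != 1.

Definition symplectic (n m : nat) (Om : 'M[F]_m) :=
  [/\ m = (n + n)%N, Om^T = - Om, forall i, Om i i = 0 & Om \in unitmx].

Definition omega m (Om : 'M[F]_m) (v w : 'rV[F]_m) : F := (v *m Om *m w^T) 0 0.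

Definition heis m := ('rV[F]_m * F)%type.

Definition hmul m (Om : 'M[F]_m) (x y : heis m) : heis m :=
  (x.1 + y.1, x.2 + y.2 + (2%:R)^-1 * omega Om x.1 y.1).

(* B is a frame of an (oriented) Lagrangian: n independent rows spanning an
   isotropic subspace (Lagrangian since dim V = 2n). *)
Definition frame n m (Om : 'M[F]_m) (B : 'M[F]_(n, m)) :=
  (\rank B == n) && (B *m Om *m B^T == 0).

Definition inHL (psi : F -> algC) n m (Om : 'M[F]_m) (B : 'M[F]_(n, m))
    (f : heis m -> algC) :=
  forall (l : 'rV[F]_m) (z : F) (h : heis m), (l <= B)%MS ->
    f (hmul Om (0, z) (hmul Om (l, 0) h)) = psi z * f h.

Definition rtrans m (Om : 'M[F]_m) (h : heis m) (f : heis m -> algC) :=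
  fun x => f (hmul Om x h).

(* omega_wedge(o_L, o_M) for o_L = wedge of rows of BL, o_M = wedge of rows of BM *)
Definition owedge n m (Om : 'M[F]_m) (BL BM : 'M[F]_(n, m)) : F :=
  (-1) ^+ 'C(n, 2) * \det (BL *m Om *m BM^T).

Definition legendre (a : F) : algC :=
  if a == 0 then 0 else if [exists b : F, b ^+ 2 == a] then 1 else -1.

Definition G1 (psi : F -> algC) : algC := \sum_(z : F) psi ((2%:R)^-1 * z ^+ 2).

Definition T0 (psi : F -> algC) n m (Om : 'M[F]_m) (BM BL : 'M[F]_(n, m))
    (f : heis m -> algC) : heis m -> algC :=
  fun h => (G1 psi / (#|F|%:R)) ^+ n
           * legendre ((-1) ^+ 'C(n, 2) * owedge Om BL BM)
           * \sum_(x : 'rV[F]_m | (x <= BM)%MS) f (hmul Om (x, 0) h).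

Definition general_position n m (BM BL : 'M[F]_(n, m)) :=
  \rank (col_mx BM BL) == m.

Definition triv n m :=
  'M[F]_(n, m) -> 'M[F]_(n, m) -> (heis m -> algC) -> (heis m -> algC).

(* T is the canonical trivialization T^V (T M L is T^V_{M°,L°}) *)
Definition canonical_triv (psi : F -> algC) n m (Om : 'M[F]_m) (T : triv n m) :=
  [/\ (forall M L, frame Om M -> frame Om L -> forall f,
          inHL psi Om L f -> inHL psi Om M (T M L f)),
      (forall M L, frame Om M -> frame Om L -> forall (a : algC) f g,
          inHL psi Om L f -> inHL psi Om L g ->
          T M L (fun x => a * f x + g x) = (fun x => a * T M L f x + T M L g x)),
      (forall M L, frame Om M -> frame Om L -> forall h f,
          inHL psi Om L f -> T M L (rtrans Om h f) = rtrans Om h (T M L f)),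
      (forall M L, frame Om M -> frame Om L ->
          (forall f g, inHL psi Om L f -> inHL psi Om L g -> T M L f = T M L g -> f = g)
          /\ (forall g, inHL psi Om M g -> exists f, inHL psi Om L f /\ T M L f = g)) /\
      (forall N M L, frame Om N -> frame Om M -> frame Om L -> forall f,
          inHL psi Om L f -> T N M (T M L f) = T N L f) &
      (forall M L, frame Om M -> frame Om L -> general_position M L -> forall f,
          inHL psi Om L f -> T M L f = T0 psi Om M L f)].

Definition inHV (psi : F -> algC) n m (Om : 'M[F]_m) (T : triv n m)
    (v : 'M[F]_(n, m) -> heis m -> algC) :=
  (forall B, frame Om B -> inHL psi Om B (v B)) /\
  (forall M L, frame Om M -> frame Om L -> T M L (v L) = v M).

(* H_{L1°}(V1) (x) H_{L2°}(V2), realised as functions on H(V1) x H(V2) *)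
Definition inHL2 (psi : F -> algC) n1 m1 n2 m2 (Om1 : 'M[F]_m1) (Om2 : 'M[F]_m2)
    (B1 : 'M[F]_(n1, m1)) (B2 : 'M[F]_(n2, m2)) (w : heis m1 -> heis m2 -> algC) :=
  (forall h2, inHL psi Om1 B1 (fun h1 => w h1 h2)) /\
  (forall h1, inHL psi Om2 B2 (w h1)).

Definition tensT n1 m1 n2 m2 (T1 : triv n1 m1) (T2 : triv n2 m2)
    M1 L1 M2 L2 (w : heis m1 -> heis m2 -> algC) : heis m1 -> heis m2 -> algC :=
  fun h1 h2 => T1 M1 L1 (fun h1' => T2 M2 L2 (w h1') h2) h1.

Definition tfam n1 m1 n2 m2 :=
  'M[F]_(n1, m1) -> 'M[F]_(n2, m2) -> heis m1 -> heis m2 -> algC.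

Definition inHT (psi : F -> algC) n1 m1 n2 m2 (Om1 : 'M[F]_m1) (Om2 : 'M[F]_m2)
    (T1 : triv n1 m1) (T2 : triv n2 m2) (w : tfam n1 m1 n2 m2) :=
  (forall B1 B2, frame Om1 B1 -> frame Om2 B2 -> inHL2 psi Om1 Om2 B1 B2 (w B1 B2)) /\
  (forall M1 L1 M2 L2, frame Om1 M1 -> frame Om1 L1 -> frame Om2 M2 -> frame Om2 L2 ->
     tensT T1 T2 M1 L1 M2 L2 (w L1 L2) = w M1 M2).

Definition prodform m1 m2 (Om1 : 'M[F]_m1) (Om2 : 'M[F]_m2) : 'M[F]_(m1 + m2) :=
  block_mx Om1 0 0 Om2.

Definition sLag n1 m1 n2 m2 (B1 : 'M[F]_(n1, m1)) (B2 : 'M[F]_(n2, m2))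
  : 'M[F]_(n1 + n2, m1 + m2) := block_mx B1 0 0 B2.

Definition rmap m1 m2 (x1 : heis m1) (x2 : heis m2) : heis (m1 + m2) :=
  (row_mx x1.1 x2.1, x1.2 + x2.2).

Definition alpha n1 m1 n2 m2 (v : 'M[F]_(n1 + n2, m1 + m2) -> heis (m1 + m2) -> algC)
  : tfam n1 m1 n2 m2 :=
  fun B1 B2 h1 h2 => v (sLag B1 B2) (rmap h1 h2).

Definition Hfun n m (g : 'M[F]_m) (v : 'M[F]_(n, m) -> heis m -> algC)
  : 'M[F]_(n, m) -> heis m -> algC :=
  fun B x => v (B *m g) (x.1 *m g, x.2).

Definition Hfun2 n1 m1 n2 m2 (g1 : 'M[F]_m1) (g2 : 'M[F]_m2) (w : tfam n1 m1 n2 m2)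
  : tfam n1 m1 n2 m2 :=
  fun B1 B2 h1 h2 => w (B1 *m g1) (B2 *m g2) (h1.1 *m g1, h1.2) (h2.1 *m g2, h2.2).

Definition rho n m (g : 'M[F]_m) v := @Hfun n m (invmx g) v.
Definition rho2 n1 m1 n2 m2 (g1 : 'M[F]_m1) (g2 : 'M[F]_m2) w :=
  @Hfun2 n1 m1 n2 m2 (invmx g1) (invmx g2) w.

Definition symp_iso m (Om Om' : 'M[F]_m) (g : 'M[F]_m) :=
  (g \in unitmx) && (g *m Om' *m g^T == Om).

Definition Sp m (Om : 'M[F]_m) (g : 'M[F]_m) := symp_iso Om Om g.

End Defs.

(* Main.v *)
Require Import Defs.
From HB Require Import structures.
From mathcomp Require Import all_boot all_order all_algebra all_field.
From mathcomp Require fingroup cyclic.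
Set Implicit Arguments. Unset Strict Implicit. Unset Printing Implicit Defensive.
Import GRing.Theory Num.Theory.
Local Open Scope ring_scope.
From Stdlib Require Import FunctionalExtensionality.
Section A.
Variable F : finFieldType.

Lemma omega_prod m1 m2 (Om1 : 'M[F]_m1) (Om2 : 'M[F]_m2) x1 x2 y1 y2 :
  omega (prodform Om1 Om2) (row_mx x1 x2) (row_mx y1 y2) = omega Om1 x1 y1 + omega Om2 x2 y2.
Proof.
rewrite /omega /prodform mul_row_block !mulmx0 addr0 add0r tr_row_mx mul_row_col.
by rewrite mxE.
Qed.

Lemma addr6 (R : zmodType) (a b c d e f : R) : a + b + c + (d + e + f) = a + d + (b + e) + (c + f).
Proof. by rewrite addrACA (addrACA a). Qed.

Lemma rmapM m1 m2 (Om1 : 'M[F]_m1) (Om2 : 'M[F]_m2) a1 b1 a2 b2 :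
  rmap (hmul Om1 a1 b1) (hmul Om2 a2 b2) = hmul (prodform Om1 Om2) (rmap a1 a2) (rmap b1 b2).
Proof.
rewrite /rmap /hmul /= omega_prod add_row_mx mulrDr; congr (_, _).
by rewrite addr6.
Qed.

Lemma omega0l m (Om : 'M[F]_m) y : omega Om 0 y = 0.
Proof. by rewrite /omega !mul0mx mxE. Qed.

Lemma hmul0z m (Om : 'M[F]_m) z (x : 'rV[F]_m) s : hmul Om (0, z) (x, s) = (x, z + s).
Proof. by rewrite /hmul /= omega0l mulr0 addr0 add0r. Qed.

Lemma hmul00 m (Om : 'M[F]_m) (h : heis F m) : hmul Om (0, 0) h = h.
Proof. by case: h => x s; rewrite hmul0z add0r. Qed.

Lemma sub_sLag n1 m1 n2 m2 (B1 : 'M[F]_(n1, m1)) (B2 : 'M[F]_(n2, m2)) p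
   (x1 : 'M_(p, m1)) (x2 : 'M_(p, m2)) :
  (row_mx x1 x2 <= sLag B1 B2)%MS = (x1 <= B1)%MS && (x2 <= B2)%MS.
Proof.
apply/idP/andP.
  case/submxP=> D; rewrite -[D]hsubmxK /sLag mul_row_block !mulmx0 addr0 add0r.
  by case/eq_row_mx => -> ->; rewrite !submxMl.
case=> /submxP [D1 ->] /submxP [D2 ->]; apply/submxP; exists (row_mx D1 D2).
by rewrite /sLag mul_row_block !mulmx0 addr0 add0r.
Qed.

Lemma blk_mul n1 m1 n2 m2 k1 k2 (A1 : 'M[F]_(n1, m1)) (A2 : 'M[F]_(n2, m2))
  (C1 : 'M[F]_(k1, m1)) (C2 : 'M[F]_(k2, m2)) (P1 : 'M[F]_m1) (P2 : 'M[F]_m2) :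
  sLag A1 A2 *m prodform P1 P2 *m (sLag C1 C2)^T =
  block_mx (A1 *m P1 *m C1^T) 0 0 (A2 *m P2 *m C2^T).
Proof.
rewrite /sLag /prodform tr_block_mx !trmx0 !mulmx_block.
by rewrite !mulmx0 !mul0mx !addr0 !add0r !mul0mx.
Qed.

Lemma frame_sLag n1 m1 n2 m2 (Om1 : 'M[F]_m1) (Om2 : 'M[F]_m2)
  (B1 : 'M[F]_(n1, m1)) (B2 : 'M[F]_(n2, m2)) :
  frame Om1 B1 -> frame Om2 B2 -> frame (prodform Om1 Om2) (sLag B1 B2).
Proof.
case/andP=> /eqP r1 /eqP i1 /andP [/eqP r2 /eqP i2].
by rewrite /frame blk_mul i1 i2 block_mx0 eqxx /sLag rank_diag_block_mx r1 r2 eqxx.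
Qed.

End A.
Section B.
Variable F : finFieldType.

Lemma avoid2 p1 p2 p3 m (P : 'M[F]_(p1, m)) (A : 'M[F]_(p2, m)) (B : 'M[F]_(p3, m)) :
  ~~ (P <= A)%MS -> ~~ (P <= B)%MS ->
  exists v : 'rV[F]_m, [&& (v <= P)%MS, ~~ (v <= A)%MS & ~~ (v <= B)%MS].
Proof.
case/row_subPn=> i Hi /row_subPn [j Hj].
have xP := row_sub i P; have yP := row_sub j P.
case: (boolP (row i P <= B)%MS) => xB; last by exists (row i P); rewrite xP Hi xB.
case: (boolP (row j P <= A)%MS) => yA; first last.
  by exists (row j P); rewrite yP Hj yA.
exists (row i P + row j P); rewrite addmx_sub //=; apply/andP; split.
  apply: contra Hi => H; rewrite -(addrK (row j P) (row i P)).
  by rewrite addmx_sub // -scaleN1r scalemx_sub.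
apply: contra Hj => H; rewrite -(addKr (row i P) (row j P)).
by rewrite addmx_sub // -scaleN1r scalemx_sub.
Qed.

Variables (n m : nat) (Om : 'M[F]_m).
Hypotheses (hm : m = (n + n)%N) (hskew : Om^T = - Om) (hunit : Om \in unitmx)
  (h2 : (2%:R : F) != 0).

Lemma alt (x : 'rV[F]_m) : x *m Om *m x^T = 0.
Proof.
set s := x *m Om *m x^T.
have e1 : s^T = - s.
  by rewrite /s !trmx_mul trmxK hskew mulNmx mulmxN mulmxA.
have e2 : s^T = s by rewrite {1}[s]mx11_scalar tr_scalar_mx -mx11_scalar.
have : (2%:R : F) *: s == 0 by rewrite scaler_nat mulr2n -{1}e2 e1 addNr.
by rewrite scaler_eq0 (negPf h2) => /eqP.
Qed.

Lemma rankOmT p (W : 'M[F]_(p, m)) : \rank (Om *m W^T) = \rank W.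
Proof.
have := (eqmxMfull W^T (_ : row_full Om)).1; rewrite mxrank_tr; apply.
by rewrite row_full_unit.
Qed.

Lemma perpX p (X : 'M[F]_(n, m)) (y : 'M[F]_(p, m)) :
  frame Om X -> y *m Om *m X^T = 0 -> (y <= X)%MS.
Proof.
case/andP=> /eqP rX /eqP iX yO.
set K := kermx (Om *m X^T).
have sXK : (X <= K)%MS by rewrite sub_kermx mulmxA iX.
have rK : \rank K = n by rewrite mxrank_ker rankOmT rX hm addnK.
have sKX : (K <= X)%MS by rewrite -(mxrank_leqif_sup sXK).2 rX rK.
by apply: submx_trans sKX; rewrite sub_kermx mulmxA yO.
Qed.

Lemma capP k (W : 'M[F]_(k, m)) (X : 'M[F]_(n, m)) :
  \rank W = k -> W *m Om *m W^T = 0 -> \rank (W :&: X) = 0%N -> frame Om X ->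
  (\rank (X :&: kermx (Om *m W^T)) <= n - k)%N.
Proof.
move=> rW iW cWX fX.
set Kx := X *m Om *m W^T.
have rKx : \rank Kx = k.
  have e : Kx^T = - (W *m Om *m X^T).
    by rewrite /Kx !trmx_mul trmxK hskew mulNmx mulmxN mulmxA.
  rewrite -mxrank_tr e mxrank_opp.
  have : row_free (W *m Om *m X^T).
    rewrite -kermx_eq0; set U := kermx _.
    have UW : (U *m W <= W :&: X)%MS.
      rewrite sub_capmx submxMl perpX // -!mulmxA.
      by have := mulmx_ker (W *m Om *m X^T); rewrite -!mulmxA.
    have : U *m W = 0.
      by apply/eqP; rewrite -mxrank_eq0 -leqn0 -cWX mxrankS.
    rewrite -(mul0mx _ W) => /(row_free_inj _) -> //.
    by rewrite /row_free rW.
  by move/eqP.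
set C := (X :&: kermx (Om *m W^T))%MS.
have /submxP [D eD] : (C <= X)%MS by apply: capmxSl.
have DK : (D <= kermx Kx)%MS.
  rewrite sub_kermx /Kx !mulmxA -eD -mulmxA.
  by have := capmxSr X (kermx (Om *m W^T)); rewrite sub_kermx.
apply: leq_trans (mxrankS (_ : (C <= kermx Kx *m X)%MS)) _.
  by rewrite eD submxMr.
by apply: leq_trans (mxrankM_maxl _ _) _; rewrite mxrank_ker rKx.
Qed.

Lemma greedy (X Z : 'M[F]_(n, m)) :
  (frame Om X \/ X = 0) -> (frame Om Z \/ Z = 0) ->
  forall k, (k <= n)%N -> exists W : 'M[F]_(k, m),
   [/\ \rank W = k, W *m Om *m W^T = 0, \rank (W :&: X) = 0%N & \rank (W :&: Z) = 0%N].
Proof.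
move=> hX hZ; elim=> [_|k IH ltkn].
  exists 0; split; [exact: mxrank0 | by rewrite !mul0mx | |];
  by apply/eqP; rewrite -leqn0; apply: leq_trans (mxrankS (capmxSl _ _)) _; rewrite mxrank0.
have [W [rW iW cX cZ]] := IH (ltnW ltkn).
set P := kermx (Om *m W^T).
have rP : \rank P = (m - k)%N by rewrite mxrank_ker rankOmT rW.
have WP : (W <= P)%MS by rewrite sub_kermx mulmxA iW.
have bnd : forall Y : 'M[F]_(n, m), (frame Om Y \/ Y = 0) -> \rank W = k ->
    \rank (W :&: Y) = 0%N -> ~~ (P <= W + Y :&: P)%MS.
  move=> Y hY _ cY; apply/negP => /mxrankS; apply/negP; rewrite -ltnNge rP.
  apply: leq_ltn_trans (mxrank_adds_leqif _ _).1 _.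
  have : (\rank (Y :&: P) <= n - k)%N.
    case: hY => [fY|->]; first exact: capP.
    by apply: leq_trans (mxrankS (capmxSl _ _)) _; rewrite mxrank0.
  have -> : (m - k = n + (n - k))%N by rewrite hm -addnBA ?(ltnW ltkn).
  rewrite rW => H; apply: leq_ltn_trans (leq_add (leqnn k) H) _.
  by rewrite ltn_add2r.
have [v /and3P [vP vA vB]] := avoid2 (bnd X hX rW cX) (bnd Z hZ rW cZ).
have vW : ~~ (v <= W)%MS by apply: contra vA => H; apply: submx_trans H (addsmxSl _ _).
have vO : v *m Om *m W^T = 0 by apply/eqP; rewrite -mulmxA -sub_kermx.
have Wv : W *m Om *m v^T = 0.
  apply: trmx_inj; rewrite !trmx_mul trmxK hskew mulNmx mulmxN mulmxA vO trmx0.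
  by rewrite oppr0.
have CP : (col_mx v W <= P)%MS by rewrite col_mx_sub vP WP.
have rC : \rank (col_mx v W) = k.+1.
  apply/eqP; rewrite eqn_leq rank_leq_row /=.
  have sW : (W <= col_mx v W)%MS.
    have := (addsmxE v W).2 _ W; case=> _ <-; exact: addsmxSr.
  have : (\rank W < \rank (col_mx v W))%N.
    by rewrite (ltn_leqif (mxrank_leqif_sup sW)) col_mx_sub (negPf vW).
  by rewrite rW.
have iC : col_mx v W *m Om *m (col_mx v W)^T = 0.
  rewrite tr_col_mx !mul_col_mx !mul_mx_row alt vO Wv iW !row_mx0.
  by apply/matrixP=> i j; rewrite !mxE; case: splitP => *; rewrite mxE.
have capS : forall Y : 'M[F]_(n, m), ~~ (v <= W + Y :&: P)%MS ->
    \rank (W :&: Y) = 0%N -> \rank (col_mx v W :&: Y) = 0%N.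
  move=> Y H cY; apply/eqP; rewrite -leqn0.
  apply: leq_trans (mxrankS (_ : (_ <= W :&: Y)%MS)) _; last by rewrite cY.
  apply/row_subP => i; set y := row i _.
  have yC : (y <= col_mx v W)%MS := submx_trans (row_sub _ _) (capmxSl _ _).
  have yY : (y <= Y)%MS := submx_trans (row_sub _ _) (capmxSr _ _).
  have yP : (y <= P)%MS := submx_trans yC CP.
  case/submxP: yC => D eD; move: eD; rewrite -[D]hsubmxK mul_row_col => eD.
  set c := lsubmx D in eD; set r := rsubmx D in eD.
  have [c0|cn0] := eqVneq c 0.
    by rewrite sub_capmx yY andbT eD c0 mul0mx add0r submxMl.
  have c00 : c 0 0 != 0.
    by apply: contra cn0 => /eqP e; apply/eqP/matrixP => i0 j0; rewrite !ord1 e mxE.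
  case/negP: H.
  have -> : v = (c 0 0)^-1 *: (y + (- r) *m W).
    have ec : c *m v = c 0 0 *: v by rewrite {1}[c]mx11_scalar mul_scalar_mx.
    by rewrite eD mulNmx addrK ec scalerA mulVf // scale1r.
  rewrite scalemx_sub // addmx_sub //; last first.
    by apply: submx_trans (addsmxSl _ _); apply: submxMl.
  by apply: submx_trans (addsmxSr _ _); rewrite sub_capmx yY.
exists (col_mx v W); split; [exact: rC | exact: iC | exact: capS | exact: capS].
Qed.

Lemma exists_frame : exists X : 'M[F]_(n, m), frame Om X.
Proof.
have [W [rW iW _ _]] := greedy (or_intror (erefl 0)) (or_intror (erefl 0)) (leqnn n).
by exists W; rewrite /frame rW iW !eqxx.
Qed.

Lemma gp_of_cap (A B : 'M[F]_(n, m)) :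
  frame Om A -> frame Om B -> \rank (A :&: B) = 0%N -> general_position A B.
Proof.
case/andP=> /eqP rA _ /andP [/eqP rB _] cAB.
have := mxrank_sum_cap A B; rewrite cAB addn0 rA rB -hm.
by rewrite /general_position; have [-> _] := addsmxE A B => ->.
Qed.

Lemma exists_trans (X Z : 'M[F]_(n, m)) : frame Om X -> frame Om Z ->
  exists Y, [/\ frame Om Y, general_position Z Y & general_position Y X].
Proof.
move=> fX fZ.
have [W [rW iW cX cZ]] := greedy (or_introl fX) (or_introl fZ) (leqnn n).
have fW : frame Om W by rewrite /frame rW iW !eqxx.
exists W; split=> //; first by apply: gp_of_cap; rewrite // capmxC.
exact: gp_of_cap.
Qed.

End B.

Module UP.
Import fingroup cyclic.
Lemma unit_pow (F : finFieldType) (a : F) : a != 0 -> exists (g : F) , forall x : F, x != 0 -> exists i : nat, x = g ^+ i.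
Proof.
move=> _.
have /cyclicP [u Hu] := field_unit_group_cyclic [group of [set: {unit F}]].
exists (FinRing.uval u) => x x0.
have xu : x \is a GRing.unit by rewrite unitfE.
have : FinRing.Unit xu \in <[u]>%g by rewrite -Hu inE.
case/cycleP=> i Hi; exists i.
by rewrite -FinRing.val_unitX -Hi.
Qed.
End UP.
Section Leg.
Variable F : finFieldType.

Definition issq (a : F) := [exists b : F, b ^+ 2 == a].

Lemma issqP a : reflect (exists b, b ^+ 2 = a) (issq a).
Proof. by apply: (iffP existsP) => [[b /eqP]|[b <-]]; exists b. Qed.

Lemma legendreM (a b : F) : legendre (a * b) = legendre a * legendre b.
Proof.
rewrite /legendre mulf_eq0.
have [->|a0] := eqVneq a 0; first by rewrite /= mul0r.
have [->|b0] := eqVneq b 0; first by rewrite orbT mulr0.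
have E : forall x : F, [exists c : F, c ^+ 2 == x] = issq x by [].
rewrite /= !E.
rewrite /= -!/(issq _).
have [g Hg] := UP.unit_pow a0.
have sqev : forall i, issq (g ^+ (i.*2)) by move=> i; apply/issqP; exists (g ^+ i); rewrite -exprM -mul2n mulnC.
have key : forall x, x != 0 -> ~~ issq x -> exists i, x = g ^+ (i.*2.+1).
  move=> x x0; have [i ->] := Hg x x0; rewrite -(odd_double_half i); case: (odd i) => /=.
    by move=> _; exists i./2; rewrite add1n.
  by rewrite add0n sqev.
case: (boolP (issq a)) => [/(issqP a) [c ec]|na]; case: (boolP (issq b)) => [/(issqP b) [d ed]|nb].
- have -> : issq (a * b) by apply/(issqP (a * b)); exists (c * d); rewrite exprMn ec ed.
  by rewrite mulr1.
- rewrite mul1r; case: ifP => // /(issqP (a * b)) [e ee]; case/negP: nb; apply/(issqP b).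
  have c0 : c != 0 by apply: contra a0 => /eqP c0; rewrite -ec c0 expr0n.
  exists (e / c); rewrite expr_div_n ee ec mulrC mulKf //.
- rewrite mulr1; case: ifP => // /(issqP (a * b)) [e ee]; case/negP: na; apply/(issqP a).
  have d0 : d != 0 by apply: contra b0 => /eqP d0; rewrite -ed d0 expr0n.
  exists (e / d); rewrite expr_div_n ee ed mulfK //.
- rewrite mulrNN mulr1.
  have [i ei] := key a a0 na; have [j ej] := key b b0 nb.
  by rewrite ei ej -exprD addSn addnS -doubleD -doubleS sqev.
Qed.
End Leg.
Section C.
Variable F : finFieldType.
Variable psi : F -> algC.

Lemma T0Z n m (Om : 'M[F]_m) (M L : 'M[F]_(n, m)) (c : algC) g h :
  T0 psi Om M L (fun b => c * g b) h = c * T0 psi Om M L g h.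
Proof. by rewrite /T0 -mulr_sumr mulrCA. Qed.

Lemma T0_comm n1 m1 n2 m2 (Om1 : 'M[F]_m1) (Om2 : 'M[F]_m2)
  (M1 L1 : 'M[F]_(n1, m1)) (M2 L2 : 'M[F]_(n2, m2)) (G : heis F m1 -> heis F m2 -> algC) a h2 :
  T0 psi Om2 M2 L2 (fun b => T0 psi Om1 M1 L1 (fun a' => G a' b) a) h2 =
  T0 psi Om1 M1 L1 (fun a' => T0 psi Om2 M2 L2 (G a') h2) a.
Proof.
rewrite /T0 -[in LHS]mulr_sumr -[in RHS]mulr_sumr mulrCA.
by rewrite (exchange_big _ _ _ (fun x : 'rV_m2 => (x <= M2)%MS)).
Qed.

Lemma sum_split n1 m1 n2 m2 (M1 : 'M[F]_(n1, m1)) (M2 : 'M[F]_(n2, m2)) (G : 'rV[F]_(m1 + m2) -> algC) :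
  \sum_(x : 'rV[F]_(m1 + m2) | (x <= sLag M1 M2)%MS) G x =
  \sum_(x1 : 'rV[F]_m1 | (x1 <= M1)%MS) \sum_(x2 : 'rV[F]_m2 | (x2 <= M2)%MS) G (row_mx x1 x2).
Proof.
rewrite pair_big_dep /=.
rewrite (reindex (fun p : 'rV[F]_m1 * 'rV[F]_m2 => row_mx p.1 p.2)) /=.
  by apply: eq_bigl => p; rewrite sub_sLag.
apply: onW_bij; exists (fun x => (lsubmx x, rsubmx x)) => [[a b]|x] /=.
  by rewrite row_mxKl row_mxKr.
by rewrite hsubmxK.
Qed.

Lemma sign_sq (k : nat) (x : F) : (-1) ^+ k * ((-1) ^+ k * x) = x.
Proof. by rewrite mulrA -exprD addnn -mul2n exprM sqrrN !expr1n mul1r. Qed.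

Lemma T0_prod n1 m1 n2 m2 (Om1 : 'M[F]_m1) (Om2 : 'M[F]_m2)
  (M1 L1 : 'M[F]_(n1, m1)) (M2 L2 : 'M[F]_(n2, m2)) (f : heis F (m1 + m2) -> algC) h1 h2 :
  T0 psi (prodform Om1 Om2) (sLag M1 M2) (sLag L1 L2) f (rmap h1 h2) =
  tensT (T0 psi Om1) (T0 psi Om2) M1 L1 M2 L2 (fun a b => f (rmap a b)) h1 h2.
Proof.
rewrite /tensT /T0 sum_split /owedge blk_mul det_ublock !sign_sq legendreM exprD.
rewrite -[in RHS]mulr_sumr.
rewrite mulrACA -!mulrA; do 4 congr (_ * _).
apply: eq_bigr => x1 _; apply: eq_bigr => x2 _.
by rewrite rmapM /rmap /= addr0.
Qed.

End C.
Section D.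
Variable F : finFieldType.
Variable psi : F -> algC.

Lemma gp_sLag n1 m1 n2 m2 (A1 B1 : 'M[F]_(n1, m1)) (A2 B2 : 'M[F]_(n2, m2)) :
  general_position A1 B1 -> general_position A2 B2 ->
  general_position (sLag A1 A2) (sLag B1 B2).
Proof.
rewrite /general_position => /row_fullP [D1 e1] /row_fullP [D2 e2]; apply/row_fullP.
move: e1 e2; rewrite -[D1]hsubmxK -[D2]hsubmxK !mul_row_col => e1 e2.
exists (row_mx (block_mx (lsubmx D1) 0 0 (lsubmx D2)) (block_mx (rsubmx D1) 0 0 (rsubmx D2))).
rewrite mul_row_col /sLag !mulmx_block !mulmx0 !mul0mx !addr0 !add0r.
by rewrite add_block_mx !addr0 e1 e2 -scalar_mx_block.
Qed.

Lemma rmap_0z m1 m2 z : rmap (0 : 'rV[F]_m1, z) (0 : 'rV[F]_m2, 0) = (0, z).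
Proof. by rewrite /rmap /= row_mx0 addr0. Qed.
Lemma rmap_z0 m1 m2 z : rmap (0 : 'rV[F]_m1, 0) (0 : 'rV[F]_m2, z) = (0, z).
Proof. by rewrite /rmap /= row_mx0 add0r. Qed.
Lemma rmap_l0 m1 m2 (l : 'rV[F]_m1) : rmap (l, 0) (0 : 'rV[F]_m2, 0) = (row_mx l 0, 0).
Proof. by rewrite /rmap /= addr0. Qed.
Lemma rmap_0l m1 m2 (l : 'rV[F]_m2) : rmap (0 : 'rV[F]_m1, 0) (l, 0) = (row_mx 0 l, 0).
Proof. by rewrite /rmap /= addr0. Qed.

Lemma inHL_rmap n1 m1 n2 m2 (Om1 : 'M[F]_m1) (Om2 : 'M[F]_m2)
  (B1 : 'M[F]_(n1, m1)) (B2 : 'M[F]_(n2, m2)) f :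
  inHL psi (prodform Om1 Om2) (sLag B1 B2) f ->
  inHL2 psi Om1 Om2 B1 B2 (fun a b => f (rmap a b)).
Proof.
move=> Hf; split.
  move=> h2 l z h lB.
  rewrite -{1}[h2](hmul00 Om2) -{1}[h2](hmul00 Om2) !rmapM rmap_0z rmap_l0 Hf //.
  by rewrite sub_sLag lB sub0mx.
move=> h1 l z h lB.
rewrite -{1}[h1](hmul00 Om1) -{1}[h1](hmul00 Om1) !rmapM rmap_z0 rmap_0l Hf //.
by rewrite sub_sLag lB sub0mx.
Qed.

Section Key.
Variables (n1 m1 n2 m2 : nat) (Om1 : 'M[F]_m1) (Om2 : 'M[F]_m2).
Variables (T1 : triv F n1 m1) (T2 : triv F n2 m2) (T12 : triv F (n1 + n2) (m1 + m2)).
Hypotheses (h2 : (2%:R : F) != 0) (hS1 : symplectic n1 Om1) (hS2 : symplectic n2 Om2)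
  (hc1 : canonical_triv psi Om1 T1) (hc2 : canonical_triv psi Om2 T2)
  (hc12 : canonical_triv psi (prodform Om1 Om2) T12).

Lemma exists_trans_s n m (Om : 'M[F]_m) (X Z : 'M[F]_(n, m)) : symplectic n Om ->
  frame Om X -> frame Om Z ->
  exists Y, [/\ frame Om Y, general_position Z Y & general_position Y X].
Proof. by case=> hm hsk _ hu; apply: exists_trans. Qed.

Lemma exists_frame_s n m (Om : 'M[F]_m) : symplectic n Om -> exists X : 'M[F]_(n, m), frame Om X.
Proof. by case=> hm hsk _ hu; apply: exists_frame. Qed.

Lemma KEY (X1 Z1 : 'M[F]_(n1, m1)) (X2 Z2 : 'M[F]_(n2, m2)) f :
  frame Om1 X1 -> frame Om1 Z1 -> frame Om2 X2 -> frame Om2 Z2 ->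
  inHL psi (prodform Om1 Om2) (sLag X1 X2) f -> forall h1 h2,
  T12 (sLag Z1 Z2) (sLag X1 X2) f (rmap h1 h2) =
  tensT T1 T2 Z1 X1 Z2 X2 (fun a b => f (rmap a b)) h1 h2.
Proof.
move=> fX1 fZ1 fX2 fZ2 Hf h1 h2'.
case: hc1 => i1 _ _ [_ c1] g1; case: hc2 => i2 _ _ [_ c2] g2.
case: hc12 => i12 _ _ [_ c12] g12.
have [Y1 [fY1 gZY1 gYX1]] := exists_trans_s hS1 fX1 fZ1.
have [Y2 [fY2 gZY2 gYX2]] := exists_trans_s hS2 fX2 fZ2.
have fX := frame_sLag fX1 fX2; have fY := frame_sLag fY1 fY2; have fZ := frame_sLag fZ1 fZ2.
rewrite -(c12 _ _ _ fZ fY fX _ Hf) (g12 _ _ fY fX (gp_sLag gYX1 gYX2) _ Hf).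
have Hg : inHL psi (prodform Om1 Om2) (sLag Y1 Y2)
   (T0 psi (prodform Om1 Om2) (sLag Y1 Y2) (sLag X1 X2) f).
  by rewrite -(g12 _ _ fY fX (gp_sLag gYX1 gYX2) _ Hf); apply: i12.
rewrite (g12 _ _ fZ fY (gp_sLag gZY1 gZY2) _ Hg) T0_prod.
set w := fun a b => f (rmap a b).
have Hw := inHL_rmap Hf; rewrite -/w in Hw.
have -> : (fun a b => T0 psi (prodform Om1 Om2) (sLag Y1 Y2) (sLag X1 X2) f (rmap a b)) =
  tensT (T0 psi Om1) (T0 psi Om2) Y1 X1 Y2 X2 w.
  by apply: functional_extensionality => a; apply: functional_extensionality => b; rewrite T0_prod.
rewrite /tensT.
have -> : (fun a => T2 Z2 X2 (w a) h2') =
   (fun a => T0 psi Om2 Z2 Y2 (T0 psi Om2 Y2 X2 (w a)) h2').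
  apply: functional_extensionality => a.
  have wa : inHL psi Om2 X2 (w a) by case: Hw.
  have Hga : inHL psi Om2 Y2 (T0 psi Om2 Y2 X2 (w a)) by rewrite -g2 //; apply: i2.
  by rewrite -(c2 _ _ _ fZ2 fY2 fX2 _ wa) (g2 _ _ fY2 fX2 gYX2 _ wa) (g2 _ _ fZ2 fY2 gZY2 _ Hga).
set phi := (fun a => T0 psi Om2 Z2 Y2 (T0 psi Om2 Y2 X2 (w a)) h2').
have Hphi : inHL psi Om1 X1 phi.
  move=> l z a lX; rewrite /phi /=.
  have -> : w (hmul Om1 (0, z) (hmul Om1 (l, 0) a)) = fun b => psi z * w a b.
    by apply: functional_extensionality => b; case: Hw => H _; rewrite H.
  have -> : T0 psi Om2 Y2 X2 (fun b => psi z * w a b) = fun h => psi z * T0 psi Om2 Y2 X2 (w a) h.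
    by apply: functional_extensionality => h; rewrite T0Z.
  by rewrite T0Z.
have Hphi' : inHL psi Om1 Y1 (T0 psi Om1 Y1 X1 phi) by rewrite -g1 //; apply: i1.
rewrite -(c1 _ _ _ fZ1 fY1 fX1 _ Hphi) (g1 _ _ fY1 fX1 gYX1 _ Hphi) (g1 _ _ fZ1 fY1 gZY1 _ Hphi').
congr (T0 psi Om1 Z1 Y1 _ h1); apply: functional_extensionality => a.
by rewrite T0_comm.
Qed.

End Key.
End D.
Section E.
Variable F : finFieldType.

Lemma natA n1 m1 n2 m2 (g1 : 'M[F]_m1) (g2 : 'M[F]_m2)
  (v : 'M[F]_(n1 + n2, m1 + m2) -> heis F (m1 + m2) -> algC) B1 B2 :
  alpha (Hfun (block_mx g1 0 0 g2) v) B1 B2 = Hfun2 g1 g2 (alpha v) B1 B2.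
Proof.
apply: functional_extensionality => h1; apply: functional_extensionality => h2.
rewrite /alpha /Hfun /Hfun2 /rmap /= /sLag mul_row_block mulmx_block.
by rewrite !mulmx0 !mul0mx !addr0 !add0r.
Qed.

Lemma invmx_block m1 m2 (g1 : 'M[F]_m1) (g2 : 'M[F]_m2) :
  g1 \in unitmx -> g2 \in unitmx ->
  invmx (block_mx g1 0 0 g2) = block_mx (invmx g1) 0 0 (invmx g2).
Proof.
move=> u1 u2.
have e : block_mx (invmx g1) 0 0 (invmx g2) *m block_mx g1 0 0 g2 = 1%:M.
  rewrite mulmx_block !mulmx0 !mul0mx !addr0 !add0r mulVmx // mulVmx //.
  by rewrite -scalar_mx_block.
have [_ uA] := mulmx1_unit e.
by rewrite -[invmx _]mul1mx -e -mulmxA mulmxV // mulmx1.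
Qed.

Lemma inHL_psi0 (psi : F -> algC) n m (Om : 'M[F]_m) (B : 'M[F]_(n, m)) f h :
  inHL psi Om B f -> psi 0 * f h = f h.
Proof. by move=> Hf; rewrite -(Hf 0 0 h (sub0mx _ _)) !hmul00. Qed.

End E.

Theorem mainTheorem10 (F : finFieldType) (psi : F -> algC) (n1 n2 m1 m2 : nat)
    (Om1 : 'M[F]_m1) (Om2 : 'M[F]_m2)
    (T1 : triv F n1 m1) (T2 : triv F n2 m2) (T12 : triv F (n1 + n2) (m1 + m2)) :
  (2%:R : F) != 0 ->
  nontriv_add_char psi ->
  symplectic n1 Om1 -> symplectic n2 Om2 ->
  canonical_triv psi Om1 T1 -> canonical_triv psi Om2 T2 ->
  canonical_triv psi (prodform Om1 Om2) T12 ->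
  [/\
   (forall (a : algC) (v w : 'M[F]_(n1 + n2, m1 + m2) -> heis F (m1 + m2) -> algC)
           (B1 : 'M[F]_(n1, m1)) (B2 : 'M[F]_(n2, m2)) (h1 : heis F m1) (h2 : heis F m2),
      alpha (fun B x => a * v B x + w B x) B1 B2 h1 h2
      = a * alpha v B1 B2 h1 h2 + alpha w B1 B2 h1 h2),
   (forall v, inHV psi (prodform Om1 Om2) T12 v -> inHT psi Om1 Om2 T1 T2 (alpha v)),
   (forall v w, inHV psi (prodform Om1 Om2) T12 v -> inHV psi (prodform Om1 Om2) T12 w ->
      (forall B1 B2, frame Om1 B1 -> frame Om2 B2 -> alpha v B1 B2 = alpha w B1 B2) ->
      forall B, frame (prodform Om1 Om2) B -> v B = w B),
   (forall w, inHT psi Om1 Om2 T1 T2 w ->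
      exists v, inHV psi (prodform Om1 Om2) T12 v /\
        forall B1 B2, frame Om1 B1 -> frame Om2 B2 -> alpha v B1 B2 = w B1 B2) &
   ((forall (Om1' : 'M[F]_m1) (Om2' : 'M[F]_m2) (T1' : triv F n1 m1) (T2' : triv F n2 m2)
           (T12' : triv F (n1 + n2) (m1 + m2)) (g1 : 'M[F]_m1) (g2 : 'M[F]_m2),
      symplectic n1 Om1' -> symplectic n2 Om2' ->
      canonical_triv psi Om1' T1' -> canonical_triv psi Om2' T2' ->
      canonical_triv psi (prodform Om1' Om2') T12' ->
      symp_iso Om1 Om1' g1 -> symp_iso Om2 Om2' g2 ->
      forall v', inHV psi (prodform Om1' Om2') T12' v' ->
      forall B1 B2, frame Om1 B1 -> frame Om2 B2 ->
        alpha (Hfun (block_mx g1 0 0 g2) v') B1 B2 = Hfun2 g1 g2 (alpha v') B1 B2) /\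
   (forall (g1 : 'M[F]_m1) (g2 : 'M[F]_m2), Sp Om1 g1 -> Sp Om2 g2 ->
      forall v, inHV psi (prodform Om1 Om2) T12 v ->
      forall B1 B2, frame Om1 B1 -> frame Om2 B2 ->
        alpha (rho (block_mx g1 0 0 g2) v) B1 B2 = rho2 g1 g2 (alpha v) B1 B2))].
Proof.
move=> h2 _ hS1 hS2 hc1 hc2 hc12.
have KEY' := KEY h2 hS1 hS2 hc1 hc2 hc12.
have [C1 fC1] := exists_frame_s h2 hS1.
have [C2 fC2] := exists_frame_s h2 hS2.
have fC := frame_sLag fC1 fC2.
case: (hc12) => i12 _ _ [_ c12] _.
split.
- by [].
- move=> v [Hv1 Hv2]; split.
    by move=> B1 B2 f1 f2; apply: inHL_rmap; apply: Hv1; apply: frame_sLag.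
  move=> M1 L1 M2 L2 fM1 fL1 fM2 fL2.
  apply: functional_extensionality => h1; apply: functional_extensionality => h2'.
  rewrite /alpha -(KEY' _ _ _ _ _ fL1 fM1 fL2 fM2) ?Hv2 //; try apply: frame_sLag => //.
  by apply: Hv1; apply: frame_sLag.
- move=> v w [Hv1 Hv2] [Hw1 Hw2] H B fB.
  have eC : v (sLag C1 C2) = w (sLag C1 C2).
    apply: functional_extensionality => [[x z]].
    have := H C1 C2 fC1 fC2.
    move/(congr1 (fun g => g (lsubmx x, z) (rsubmx x, 0))).
    by rewrite /alpha /rmap /= hsubmxK addr0.
  by rewrite -(Hv2 _ _ fB fC) -(Hw2 _ _ fB fC) eC.
- move=> w [Hw1 Hw2].
  set f0 := fun x : heis F (m1 + m2) => w C1 C2 (lsubmx x.1, x.2) (rsubmx x.1, 0).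
  have [W1 W2] := Hw1 _ _ fC1 fC2.
  have shift : forall h1 h2, w C1 C2 h1 h2 = f0 (rmap h1 h2).
    move=> [a1 s1] [a2 s2]; rewrite /f0 /rmap /= row_mxKl row_mxKr.
    have e2 := W2 (a1, s1) 0 s2 (a2, 0) (sub0mx _ _).
    rewrite hmul00 hmul0z addr0 in e2; rewrite e2.
    have e1 := W1 (a2, 0) 0 s2 (a1, s1) (sub0mx _ _).
    by rewrite hmul00 hmul0z in e1; rewrite (addrC s1 s2) e1.
  have Hf0 : inHL psi (prodform Om1 Om2) (sLag C1 C2) f0.
    move=> l z [x s] lC.
    have eh : ((x, s) : heis F (m1 + m2)) = rmap (lsubmx x, s) (rsubmx x, 0).
      by rewrite /rmap /= hsubmxK addr0.
    move: lC; rewrite -[l]hsubmxK sub_sLag => /andP [l1 l2].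
    have el : ((row_mx (lsubmx l) (rsubmx l), 0) : heis F (m1 + m2)) =
        rmap (lsubmx l, 0) (rsubmx l, 0) by rewrite /rmap /= addr0.
    rewrite eh el -rmap_0z -!rmapM -!shift W1 // W2 //.
    by rewrite (inHL_psi0 _ (W2 (lsubmx x, s))) shift.
  exists (fun B => T12 B (sLag C1 C2) f0); split.
    split; first by move=> B fB; apply: i12.
    by move=> M L fM fL; apply: c12.
  move=> B1 B2 fB1 fB2.
  apply: functional_extensionality => h1; apply: functional_extensionality => h2'.
  rewrite /alpha (KEY' _ _ _ _ _ fC1 fB1 fC2 fB2 Hf0).
  have -> : (fun a b => f0 (rmap a b)) = w C1 C2.
    by apply: functional_extensionality => a; apply: functional_extensionality => b; rewrite shift.
  by rewrite Hw2.
- split.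
    by move=> *; apply: natA.
  move=> g1 g2 /andP [u1 _] /andP [u2 _] v _ B1 B2 _ _.
  by rewrite /rho /rho2 invmx_block // natA.
Qed.
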